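(* Let $M,N$ be finitary matroids on $E$, $b=(B_M,B_N)$ with $B_M$ a base of $M$ and $B_N$ a base of $N$. Let $\mathcal{P}=\langle P_\alpha:\alpha<\xi\rangle$ be a transfinite sequence of finite directed paths without shortcuts in $D(b)$ such that for every $\beta<\alpha<\xi$ the path $P_\alpha$ is disjoint from all escorting circuits (w.r.t. $b$) of the arcs of $P_\beta$. Let $A(\mathcal{P}):=\bigcup_{\alpha<\xi}A(P_\alpha)$, let $B_M^\xi$ be obtained from $B_M$ by adding the tails and deleting the heads of the arcs in $A(\mathcal{P})\cap D_M(B_M)$, and let $B_N^\xi$ be obtained from $B_N$ by adding the tails and deleting the heads of the arcs of $D_N(B_N)$ whose reversals lie in $A(\mathcal{P})\cap D_N^{-1}(B_N)$. Then $B_M^\xi$ is a base of $M$ and $B_N^\xi$ is a base of $N$. Furthermore, if $U_{<\xi}$ is the union of the escorting circuits of the arcs of all $P_\alpha$, $\alpha<\xi$, then $D_M(B_M^\xi)[E\setminus U_{<\xi}]=D_M(B_M)[E\setminus U_{<\xi}]$ and $D_N(B_N^\xi)[E\setminus U_{<\xi}]=D_N(B_N)[E\setminus U_{<\xi}]$.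
   Context: For a base $B$ of a matroid $M$ on $E$, $D_M(B)$ is the digraph on $E$ with $ef\in D_M(B)$ iff $e\in E\setminus B$ and $f\in C_M(e,B)\setminus\{e\}$ ($C_M(e,B)$ the fundamental circuit of $e$ on $B$). $D^{-1}$ reverses all arcs; $D(b):=D_M(B_M)\cup D_N^{-1}(B_N)$. Escorting circuits of an arc $ef\in D(b)$: $C_M(e,B_M)$ if $ef\in D_M(B_M)$, and $C_N(f,B_N)$ if $ef\in D_N^{-1}(B_N)$. A path is a finite directed path; $A(P)$ denotes its arc set. A shortcut of $P$ is an arc $ef\in D(b)$ with $e,f$ on $P$, $f$ later than $e$ on $P$, and $ef\notin A(P)$. $D[X]$ denotes the subdigraph induced on $X$. *)

(* Defs.v *)
From Stdlib Require Import List Arith Classical.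
Import ListNotations.
Set Implicit Arguments.

Definition subset {E : Type} (A B : E -> Prop) : Prop := forall x, A x -> B x.
Definition list_set {E : Type} (l : list E) : E -> Prop := fun x => In x l.

Record finitary_matroid (E : Type) := FinitaryMatroid {
  indep : (E -> Prop) -> Prop;
  indep_empty : indep (fun _ => False);
  indep_subset : forall I J, indep J -> subset I J -> indep I;
  indep_aug : forall l1 l2 : list E, NoDup l1 -> NoDup l2 ->
    indep (list_set l1) -> indep (list_set l2) -> length l1 < length l2 ->
    exists x, In x l2 /\ ~ In x l1 /\ indep (list_set (x :: l1));
  indep_finitary : forall I,
    (forall l : list E, subset (list_set l) I -> indep (list_set l)) -> indep I
}.

Definition is_base {E} (M : finitary_matroid E) (B : E -> Prop) : Prop :=
  indep M B /\ forall J, indep M J -> subset B J -> subset J B.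

Definition is_circuit {E} (M : finitary_matroid E) (C : E -> Prop) : Prop :=
  ~ indep M C /\ forall D, subset D C -> ~ subset C D -> indep M D.

(* C is the fundamental circuit C_M(e,B) of e (not in B) on B:
   the (unique, when B is a base) circuit contained in B + e. *)
Definition fund_circuit {E} (M : finitary_matroid E) (B : E -> Prop) (e : E)
    (C : E -> Prop) : Prop :=
  ~ B e /\ is_circuit M C /\ subset C (fun x => B x \/ x = e).

Definition DM {E} (M : finitary_matroid E) (B : E -> Prop) (e f : E) : Prop :=
  ~ B e /\ exists C, fund_circuit M B e C /\ C f /\ f <> e.

Definition Db {E} (M N : finitary_matroid E) (BM BN : E -> Prop) (e f : E) : Prop :=
  DM M BM e f \/ DM N BN f e.

Definition escort {E} (M N : finitary_matroid E) (BM BN : E -> Prop) (e f : E)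
    (C : E -> Prop) : Prop :=
  (DM M BM e f /\ fund_circuit M BM e C) \/ (DM N BN f e /\ fund_circuit N BN f C).

Definition path_arc {E} (p : list E) (e f : E) : Prop :=
  exists l1 l2, p = l1 ++ e :: f :: l2.

Definition later_on {E} (p : list E) (e f : E) : Prop :=
  exists l1 l2 l3, p = l1 ++ e :: l2 ++ f :: l3.

Definition is_path {E} (D : E -> E -> Prop) (p : list E) : Prop :=
  p <> [] /\ NoDup p /\ forall e f, path_arc p e f -> D e f.

Definition no_shortcut {E} (D : E -> E -> Prop) (p : list E) : Prop :=
  ~ exists e f, D e f /\ later_on p e f /\ ~ path_arc p e f.

(* strict well-order (the index set {alpha | alpha < xi} of a transfinite sequence) *)
Definition well_order {I : Type} (lt : I -> I -> Prop) : Prop :=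
  (forall a, ~ lt a a) /\ (forall a b c, lt a b -> lt b c -> lt a c) /\
  (forall a b, lt a b \/ a = b \/ lt b a) /\ well_founded lt.

Definition newBM {E} {I : Type} (M : finitary_matroid E) (BM : E -> Prop)
    (P : I -> list E) : E -> Prop :=
  fun x => (BM x \/ exists a y, path_arc (P a) x y /\ DM M BM x y) /\
           ~ (exists a y, path_arc (P a) y x /\ DM M BM y x).

(* B_N^xi : for arcs ef of A(P) in D_N^{-1}(B_N), the D_N(B_N)-arc fe has
   tail f (added) and head e (deleted) *)
Definition newBN {E} {I : Type} (N : finitary_matroid E) (BN : E -> Prop)
    (P : I -> list E) : E -> Prop :=
  fun x => (BN x \/ exists a y, path_arc (P a) y x /\ DM N BN x y) /\
           ~ (exists a y, path_arc (P a) x y /\ DM N BN y x).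

Definition Uxi {E} {I : Type} (M N : finitary_matroid E) (BM BN : E -> Prop)
    (P : I -> list E) : E -> Prop :=
  fun x => exists a e f C, path_arc (P a) e f /\ escort M N BM BN e f C /\ C x.

(* Main.v *)
Require Import Defs.
From Stdlib Require Import List Arith Lia Classical ClassicalEpsilon Sorting.Sorted Wf_nat.
Import ListNotations.

Section Mat.
Variable E : Type.
Variable M : finitary_matroid E.

Definition edec (x y : E) : {x = y} + {x <> y} := excluded_middle_informative (x = y).

Lemma indep_ext (A B : E -> Prop) : indep M A -> (forall x, B x -> A x) -> indep M B.
Proof. intros HA H. eapply indep_subset; eauto. Qed.

Lemma dep_finite (X : E -> Prop) : ~ indep M X ->
  exists l, subset (list_set l) X /\ ~ indep M (list_set l).
Proof.
  intros HX. apply NNPP. intro Hn. apply HX. apply indep_finitary.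
  intros l Hl. apply NNPP. intro Hd. apply Hn. exists l. auto.
Qed.

Fixpoint pfilter (D : E -> Prop) (l : list E) : list E :=
  match l with
  | [] => []
  | h :: t => if excluded_middle_informative (D h) then h :: pfilter D t else pfilter D t
  end.

Lemma pfilter_in D l x : In x (pfilter D l) <-> In x l /\ D x.
Proof.
  induction l as [|h t IH]; simpl. tauto.
  destruct (excluded_middle_informative (D h)); simpl; rewrite IH; split; intros H; intuition (subst; auto); contradiction.
Qed.

Lemma pfilter_len D l : length (pfilter D l) <= length l.
Proof. induction l; simpl; auto. destruct (excluded_middle_informative (D a)); simpl; lia. Qed.

Lemma pfilter_len_lt D l x : In x l -> ~ D x -> length (pfilter D l) < length l.
Proof.
  induction l as [|h t IH]; simpl. tauto.
  intros [->|Hin] Hn.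
  - destruct (excluded_middle_informative (D x)); [tauto|]. pose proof (pfilter_len D t). lia.
  - destruct (excluded_middle_informative (D h)); simpl; [specialize (IH Hin Hn); lia|].
    pose proof (pfilter_len D t). lia.
Qed.

Lemma dep_list_circuit : forall n (l : list E), length l <= n -> ~ indep M (list_set l) ->
  exists C, is_circuit M C /\ subset C (list_set l).
Proof.
  induction n as [|n IH]; intros l Hl Hd.
  - destruct l; [|simpl in Hl; lia]. exfalso. apply Hd.
    apply indep_ext with (A := fun _ => False). apply indep_empty. intros x [].
  - destruct (classic (forall D, subset D (list_set l) -> ~ subset (list_set l) D -> indep M D)) as [Hc|Hc].
    + exists (list_set l). split; [split; auto| intros x; auto].
    + apply not_all_ex_not in Hc. destruct Hc as [D HD].
      apply imply_to_and in HD. destruct HD as [HDs HD].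
      apply imply_to_and in HD. destruct HD as [HDn HDd].
      assert (Hx : exists x, list_set l x /\ ~ D x).
      { apply NNPP. intro H. apply HDn. intros x Hx. apply NNPP. intro. apply H. eauto. }
      destruct Hx as [x [Hxl HxD]].
      assert (Hlen := pfilter_len_lt D l x Hxl HxD).
      destruct (IH (pfilter D l)) as [C [HC HCs]].
      * lia.
      * intro Hi. apply HDd. apply indep_ext with (A := list_set (pfilter D l)); auto.
        intros y Hy. unfold list_set. apply pfilter_in. split; auto. apply HDs; auto.
      * exists C. split; auto. intros y Hy. apply HCs in Hy. unfold list_set in Hy.
        apply pfilter_in in Hy. apply Hy.
Qed.

Lemma dep_circuit (X : E -> Prop) : ~ indep M X -> exists C, is_circuit M C /\ subset C X.
Proof.
  intros HX. destruct (dep_finite X HX) as [l [Hl Hd]].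
  destruct (dep_list_circuit (length l) l (le_n _) Hd) as [C [HC HCs]].
  exists C. split; auto. intros x Hx; auto.
Qed.

Lemma circuit_finite (C : E -> Prop) : is_circuit M C -> exists l, NoDup l /\ forall x, C x <-> In x l.
Proof.
  intros [Hd Hm]. destruct (dep_finite C Hd) as [l [Hl Hdl]].
  exists (nodup edec l). split. apply NoDup_nodup.
  intros x. rewrite nodup_In. split; [|apply Hl].
  intros Hx. apply NNPP. intro Hn. apply Hdl. apply Hm; auto.
  intro H. apply Hn. apply H; auto.
Qed.

Lemma remove_len_nodup (x : E) l : NoDup l -> In x l -> S (length (remove edec x l)) = length l.
Proof.
  induction l as [|h t IH]; simpl. tauto.
  intros Hnd [->|Hin]; inversion Hnd; subst.
  - destruct (edec x x); [|congruence]. rewrite notin_remove; auto.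
  - destruct (edec x h).
    + subst. contradiction.
    + simpl. rewrite IH; auto.
Qed.

Lemma NoDup_remove' (x : E) l : NoDup l -> NoDup (remove edec x l).
Proof.
  induction l as [|h t IH]; simpl; auto. intros Hnd; inversion Hnd; subst.
  destruct (edec x h); auto. constructor; auto. intro H. apply in_remove in H. tauto.
Qed.

Lemma aug_iter : forall k (l1 l2 : list E), length l2 - length l1 <= k ->
  NoDup l1 -> NoDup l2 -> indep M (list_set l1) -> indep M (list_set l2) ->
  length l1 <= length l2 ->
  exists l3, NoDup l3 /\ indep M (list_set l3) /\ incl l1 l3 /\
    (forall x, In x l3 -> In x l1 \/ In x l2) /\ length l3 = length l2.
Proof.
  induction k as [|k IH]; intros l1 l2 Hk Hn1 Hn2 Hi1 Hi2 Hle.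
  - exists l1. split; [auto|split; [auto|split; [intros x; auto|split; [auto|lia]]]].
  - destruct (Nat.eq_dec (length l1) (length l2)) as [He|He].
    + exists l1. split; [auto|split; [auto|split; [intros x; auto|split; [auto|lia]]]].
    + destruct (indep_aug M Hn1 Hn2 Hi1 Hi2) as [x [Hx2 [Hx1 Hxi]]]. lia.
      destruct (IH (x :: l1) l2) as [l3 [H1 [H2 [H3 [H4 H5]]]]]; simpl; try lia; auto.
      constructor; auto.
      exists l3. repeat split; auto.
      * intros z Hz. apply H3. simpl; auto.
      * intros z Hz. destruct (H4 z Hz) as [[->|]|]; auto.
Qed.

Lemma circ_incl (C1 C2 : E -> Prop) : is_circuit M C1 -> is_circuit M C2 -> subset C1 C2 -> subset C2 C1.
Proof.
  intros [Hd1 _] [_ Hm2] Hs. apply NNPP. intro Hn. apply Hd1. apply Hm2; auto.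
Qed.

Lemma weak_elim (C1 C2 : E -> Prop) e : is_circuit M C1 -> is_circuit M C2 ->
  ~ (forall x, C1 x <-> C2 x) -> C1 e -> C2 e ->
  ~ indep M (fun x => (C1 x \/ C2 x) /\ x <> e).
Proof.
  intros HC1 HC2 Hne He1 He2 Hi.
  assert (Hf : exists f, C1 f /\ ~ C2 f).
  { apply NNPP. intro H. apply Hne. intros x.
    assert (Hs : subset C1 C2). { intros y Hy. apply NNPP. intro. apply H. eauto. }
    pose proof (circ_incl _ _ HC1 HC2 Hs). split; auto. }
  destruct Hf as [f [Hf1 Hf2]].
  destruct (circuit_finite C1 HC1) as [c1 [Hn1 Hc1]].
  destruct (circuit_finite C2 HC2) as [c2 [Hn2 Hc2]].
  set (u := nodup edec (c1 ++ c2)).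
  assert (Hu : forall x, In x u <-> C1 x \/ C2 x).
  { intros x. unfold u. rewrite nodup_In, in_app_iff, <- Hc1, <- Hc2. tauto. }
  assert (Hnu : NoDup u) by apply NoDup_nodup.
  set (s := remove edec e u).
  set (i1 := remove edec f c1).
  assert (Hlu : S (length s) = length u) by (apply remove_len_nodup; auto; apply Hu; auto).
  assert (Hl1 : S (length i1) = length c1) by (apply remove_len_nodup; auto; apply Hc1; auto).
  assert (Hc1u : length c1 <= length u).
  { apply NoDup_incl_length; auto. intros x Hx. apply Hu. left. apply Hc1; auto. }
  assert (Hii1 : indep M (list_set i1)).
  { destruct HC1 as [_ Hm]. apply Hm.
    - intros x Hx. unfold list_set in Hx. apply in_remove in Hx. apply Hc1. tauto.
    - intro H. specialize (H f Hf1). unfold list_set in H. apply in_remove in H. tauto. }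
  assert (His : indep M (list_set s)).
  { apply indep_ext with (A := fun x => (C1 x \/ C2 x) /\ x <> e); auto.
    intros x Hx. unfold list_set, s in Hx. apply in_remove in Hx. destruct Hx as [Hx Hxe].
    apply Hu in Hx. auto. }
  assert (Hnd1 : NoDup i1) by (apply NoDup_remove'; auto).
  assert (Hnds : NoDup s) by (apply NoDup_remove'; auto).
  assert (Hlen : length i1 <= length s) by lia.
  destruct (aug_iter (length s - length i1) i1 s (le_n _) Hnd1 Hnds Hii1 His Hlen) as [l3 [H3n [H3i [H3inc [H3sub H3len]]]]].
  assert (Hfl3 : ~ In f l3).
  { intro Hfl. destruct HC1 as [Hd _]. apply Hd. apply indep_ext with (A := list_set l3); auto.
    intros x Hx. destruct (edec x f); [subst; auto|]. apply H3inc. apply in_in_remove; auto. apply Hc1; auto. }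
  destruct HC2 as [Hd2 _]. apply Hd2. apply indep_ext with (A := list_set l3); auto.
  intros g Hg. apply NNPP. intro Hgl.
  assert (Hgf : g <> f) by (intro; subst; auto).
  assert (Hinc : incl l3 (remove edec g (remove edec f u))).
  { intros x Hx. assert (Hxu : In x u).
    { destruct (H3sub x Hx) as [Hx'|Hx']. apply in_remove in Hx'. apply Hu. left. apply Hc1. tauto.
      apply in_remove in Hx'. tauto. }
    apply in_in_remove. intro; subst; auto. apply in_in_remove; auto. intro; subst; auto. }
  pose proof (NoDup_incl_length H3n Hinc) as Hle.
  assert (Hgu : In g u) by (apply Hu; auto).
  assert (Hfu : In f u) by (apply Hu; auto).
  pose proof (remove_len_nodup f u Hnu Hfu).
  pose proof (remove_len_nodup g (remove edec f u) (NoDup_remove' f u Hnu) (in_in_remove _ _ Hgf Hgu)).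
  lia.
Qed.

Lemma circ_in_Bx (B C : E -> Prop) x : indep M B -> is_circuit M C ->
  (forall z, C z -> B z \/ z = x) -> C x.
Proof.
  intros HB [Hd _] Hs. apply NNPP. intro Hn. apply Hd. apply indep_ext with (A := B); auto.
  intros z Hz. destruct (Hs z Hz); auto. subst; contradiction.
Qed.

Lemma circ_unique (B C1 C2 : E -> Prop) x : indep M B -> is_circuit M C1 -> is_circuit M C2 ->
  (forall z, C1 z -> B z \/ z = x) -> (forall z, C2 z -> B z \/ z = x) ->
  forall z, C1 z <-> C2 z.
Proof.
  intros HB H1 H2 S1 S2. apply NNPP. intro Hn.
  apply (weak_elim C1 C2 x H1 H2 Hn); [eapply circ_in_Bx; eauto|eapply circ_in_Bx; eauto|].
  apply indep_ext with (A := B); auto. intros z [[Hz|Hz] Hzx].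
  destruct (S1 z Hz); tauto. destruct (S2 z Hz); tauto.
Qed.

Lemma strong_elim_n : forall n (l : list E) (C1 C2 : E -> Prop) e f, length l <= n ->
  (forall z, C1 z \/ C2 z -> In z l) -> is_circuit M C1 -> is_circuit M C2 ->
  C1 e -> C2 e -> C1 f -> ~ C2 f ->
  exists C3, is_circuit M C3 /\ C3 f /\ forall z, C3 z -> (C1 z \/ C2 z) /\ z <> e.
Proof.
  induction n as [|n IH]; intros l C1 C2 e f Hl Hsub H1 H2 He1 He2 Hf1 Hf2.
  - destruct l; [|simpl in Hl; lia]. exfalso. apply (Hsub e); auto.
  - apply NNPP. intro Hno.
    assert (Hne : ~ (forall x, C1 x <-> C2 x)) by (intro H; apply Hf2; apply H; auto).
    destruct (dep_circuit _ (weak_elim C1 C2 e H1 H2 Hne He1 He2)) as [C3 [H3 HC3]].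
    assert (Hf3 : ~ C3 f).
    { intro Hf3. apply Hno. exists C3. split; [auto|split; [auto|]]. intros z Hz; apply HC3; auto. }
    assert (Hg : exists g, C3 g /\ C2 g /\ ~ C1 g).
    { apply NNPP. intro Hn.
      assert (Hs : subset C3 C1).
      { intros z Hz. apply NNPP. intro Hz1. apply Hn. exists z. repeat split; auto.
        destruct (HC3 z Hz) as [[|] _]; tauto. }
      pose proof (circ_incl _ _ H3 H1 Hs) as Hs'. destruct (HC3 e (Hs' e He1)). auto. }
    destruct Hg as [g [Hg3 [Hg2 Hg1]]].
    assert (Hfl : In f l) by auto.
    destruct (IH (remove edec f l) C2 C3 g e) as [C4 [H4 [He4 HC4]]]; auto.
    + pose proof (remove_length_lt edec l f Hfl). lia.
    + intros z Hz. apply in_in_remove.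
      * intro; subst. destruct Hz; auto.
      * apply Hsub. destruct Hz as [Hz|Hz]; auto. destruct (HC3 z Hz); auto.
    + intro He3. destruct (HC3 e He3); auto.
    + assert (Hgl : In g l) by auto.
      destruct (IH (remove edec g l) C1 C4 e f) as [C5 [H5 [Hf5 HC5]]]; auto.
      * pose proof (remove_length_lt edec l g Hgl). lia.
      * intros z Hz. apply in_in_remove.
        -- intro; subst. destruct Hz as [Hz|Hz]; auto. destruct (HC4 g Hz); auto.
        -- apply Hsub. destruct Hz as [Hz|Hz]; auto. destruct (HC4 z Hz) as [[Hz'|Hz'] _]; auto.
           destruct (HC3 z Hz') as [[|] _]; auto.
      * intro Hf4. destruct (HC4 f Hf4) as [[|] _]; auto.
      * apply Hno. exists C5. split; [auto|split; [auto|]]. intros z H. split.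
        -- destruct (HC5 z H) as [[Hz|Hz] _]; auto. destruct (HC4 z Hz) as [[Hz'|Hz'] _]; auto.
           destruct (HC3 z Hz') as [[|] _]; auto.
        -- destruct (HC5 z H); auto.
Qed.

Lemma strong_elim (C1 C2 : E -> Prop) e f : is_circuit M C1 -> is_circuit M C2 ->
  C1 e -> C2 e -> C1 f -> ~ C2 f ->
  exists C3, is_circuit M C3 /\ C3 f /\ forall z, C3 z -> (C1 z \/ C2 z) /\ z <> e.
Proof.
  intros H1 H2. destruct (circuit_finite C1 H1) as [c1 [_ Hc1]].
  destruct (circuit_finite C2 H2) as [c2 [_ Hc2]].
  apply (strong_elim_n (length (c1 ++ c2)) (c1 ++ c2)); auto.
  intros z [Hz|Hz]; apply in_app_iff; [left; apply Hc1|right; apply Hc2]; auto.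
Qed.

End Mat.
Arguments edec {E}.
Arguments indep_ext {E}.
Arguments dep_finite {E}.
Arguments pfilter {E}.
Arguments pfilter_in {E}.
Arguments pfilter_len {E}.
Arguments pfilter_len_lt {E}.
Arguments dep_list_circuit {E}.
Arguments dep_circuit {E}.
Arguments circuit_finite {E}.
Arguments remove_len_nodup {E}.
Arguments NoDup_remove' {E}.
Arguments aug_iter {E}.
Arguments circ_incl {E}.
Arguments weak_elim {E}.
Arguments circ_in_Bx {E}.
Arguments circ_unique {E}.
Arguments strong_elim_n {E}.
Arguments strong_elim {E}.

Section Mat2.
Variable E : Type.
Variable M : finitary_matroid E.

Lemma base_ext (A B : E -> Prop) : is_base M A -> (forall z, A z <-> B z) -> is_base M B.
Proof.
  intros [HA Hm] Heq. split.
  - apply indep_ext with (A := A); auto. intros; apply Heq; auto.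
  - intros J HJ Hs z Hz. apply Heq. apply (Hm J HJ); auto. intros y Hy; apply Hs, Heq; auto.
Qed.

Lemma DM_ext (A B : E -> Prop) x y : DM M A x y -> (forall z, A z <-> B z) -> DM M B x y.
Proof.
  intros [Hx [C [[_ [HC Hs]] [Hy Hyx]]]] Heq. split. rewrite <- Heq; auto.
  exists C. split; [split; [rewrite <- Heq; auto| split; auto]|auto].
  intros z Hz. destruct (Hs z Hz); [left; apply Heq|right]; auto.
Qed.

Lemma fund_exists (B : E -> Prop) x : is_base M B -> ~ B x -> exists C, fund_circuit M B x C.
Proof.
  intros [HB Hm] Hx.
  assert (Hd : ~ indep M (fun z => B z \/ z = x)).
  { intro Hi. apply Hx. apply (Hm _ Hi); auto. intros z Hz; auto. }
  destruct (dep_circuit M _ Hd) as [C [HC Hs]]. exists C. split; auto.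
Qed.

Lemma fund_has (B C : E -> Prop) x : indep M B -> fund_circuit M B x C -> C x.
Proof. intros HB [_ [HC Hs]]. eapply circ_in_Bx; eauto. Qed.

Lemma exch1 (B C : E -> Prop) x y : is_base M B -> fund_circuit M B x C -> C y -> y <> x ->
  is_base M (fun z => (B z /\ z <> y) \/ z = x).
Proof.
  intros HBb HF Hy Hyx. pose proof HBb as [HB Hm]. pose proof HF as [Hx [HC Hs]].
  assert (HyB : B y) by (destruct (Hs y Hy); [auto|contradiction]).
  split.
  - apply NNPP; intro Hd. destruct (dep_circuit M _ Hd) as [D [HD HDs]].
    assert (HDx : forall z, D z -> B z \/ z = x).
    { intros z Hz. destruct (HDs z Hz) as [[? _]|]; auto. }
    assert (HxD : D x) by (eapply circ_in_Bx; eauto).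
    pose proof (circ_unique M B C D x HB HC HD Hs HDx) as Heq.
    apply Heq in Hy. destruct (HDs y Hy) as [[_ ?]|]; contradiction.
  - intros J HJ Hsub z Hz. apply NNPP. intro Hn.
    assert (Hz' : z = y \/ (~ B z /\ z <> x)).
    { destruct (classic (B z)); [left; apply NNPP; intro; apply Hn; auto|right; split; [auto|intro; subst; apply Hn; auto]]. }
    destruct Hz' as [->|[HzB Hzx]].
    + destruct HC as [HCd _]. apply HCd. apply indep_ext with (A := J); auto.
      intros w Hw. destruct (classic (w = y)) as [->|Hwy]; auto.
      destruct (Hs w Hw) as [HwB| ->]; [apply Hsub; left; split; auto | apply Hsub; right; auto].
    + destruct (fund_exists B z HBb HzB) as [Cz HFz]. pose proof HFz as [_ [HCz Hsz]].
      destruct (classic (Cz y)) as [Hyz|Hyz].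
      * apply (weak_elim M Cz C y HCz HC).
        -- intro H. assert (Hzz : Cz z) by (exact (circ_in_Bx M B Cz z HB HCz Hsz)).
           apply H in Hzz. destruct (Hs z Hzz); contradiction.
        -- auto.
        -- auto.
        -- apply indep_ext with (A := J); auto. intros w [[Hw|Hw] Hwy].
           ++ destruct (Hsz w Hw) as [ | -> ]; auto.
           ++ destruct (Hs w Hw) as [ | -> ]; auto.
      * destruct HCz as [HCd _]. apply HCd. apply indep_ext with (A := J); auto.
        intros w Hw. destruct (Hsz w Hw) as [HwB| ->]; auto. apply Hsub. left. split; auto.
        intro; subst; auto.
Qed.

Section Fin.
Variable K : Type.
Variables tl hd : K -> E.

Definition exB (B : E -> Prop) (L : list K) : E -> Prop :=
  fun z => (B z \/ exists k, In k L /\ tl k = z) /\ ~ exists k, In k L /\ hd k = z.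

Definition Hfin (B : E -> Prop) (L : list K) : Prop :=
  forall l1 k l2, L = l1 ++ k :: l2 -> exists C, fund_circuit M B (tl k) C /\ C (hd k) /\
    hd k <> tl k /\ forall k', In k' l2 -> ~ C (hd k').

Lemma fin_exch : forall L B, is_base M B -> Hfin B L -> is_base M (exB B L).
Proof.
  induction L as [|k L IH] using rev_ind; intros B HB HL.
  - apply base_ext with (A := B); auto. intros z; unfold exB; simpl. firstorder.
  - destruct (HL L k []) as [C [HF [Hy [Hyx _]]]]; auto.
    set (B1 := fun z => (B z /\ z <> hd k) \/ z = tl k).
    assert (HB1 : is_base M B1) by (eapply exch1; eauto).
    pose proof HF as [Htk [HC HCs]].
    assert (Hhk : B (hd k)) by (destruct (HCs _ Hy); [auto|contradiction]).
    assert (HL' : Hfin B1 L).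
    { intros l1 k1 l2 Heq. destruct (HL l1 k1 (l2 ++ [k])) as [C1 [HF1 [Hy1 [Hyx1 Hn1]]]].
      { subst. rewrite <- app_assoc. reflexivity. }
      assert (HnCk : ~ C1 (hd k)) by (apply Hn1; apply in_or_app; simpl; auto).
      pose proof HF1 as [Ht1 [HC1 HC1s]].
      assert (Hne : tl k1 <> tl k).
      { intro He. rewrite He in HF1. pose proof (circ_unique M B C C1 (tl k) (proj1 HB) HC HC1 HCs) as Hu.
        apply HnCk. apply Hu; auto. rewrite <- He. exact HC1s. }
      exists C1. split; [|split; [auto|split; [auto|]]].
      - split; [|split; auto].
        + unfold B1. intros [[? _]|]; auto.
        + intros z Hz. unfold B1. destruct (HC1s z Hz) as [HzB|]; auto. left; left. split; auto.
          intro; subst; auto.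
      - intros k' Hk'. apply Hn1. apply in_or_app; auto. }
    apply base_ext with (A := exB B1 L); [apply IH; auto|].
    assert (HLk : forall k', In k' (L ++ [k]) -> ~ B (tl k') /\ B (hd k')).
    { intros k' Hk'. apply in_split in Hk'. destruct Hk' as [l1 [l2 Heq]].
      destruct (HL l1 k' l2 Heq) as [Ck [[Ht [_ Hs]] [Hh [Hne _]]]]. split; auto.
      destruct (Hs _ Hh); [auto|contradiction]. }
    assert (HLk1 : forall k', In k' L -> ~ B (tl k') /\ B (hd k')).
    { intros k' Hk'. apply HLk. apply in_or_app; auto. }
    assert (Hkk : In k (L ++ [k])) by (apply in_or_app; simpl; auto).
    intros z. unfold exB, B1. split.
    + intros [[[[HzB Hzk]|Hz]|[k' [Hk' Hz]]] Hnh].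
      * split; [left; auto|]. intros [k'' [Hk'' Hh]]. apply in_app_iff in Hk''.
        destruct Hk'' as [|[<-|[]]]; eauto.
      * subst. split; [right; exists k; auto|].
        intros [k'' [Hk'' Hh]]. destruct (HLk k'' Hk''). rewrite Hh in *. tauto.
      * split; [right; exists k'; split; auto; apply in_or_app; auto|].
        intros [k'' [Hk'' Hh]]. destruct (HLk k'' Hk''). destruct (HLk1 k' Hk'). subst. rewrite Hh in *. tauto.
    + intros [[HzB|[k' [Hk' Hz]]] Hnh].
      * split.
        -- left; left; split; auto. intro; subst; apply Hnh; eauto.
        -- intros [k'' [Hk'' Hh]]. apply Hnh. exists k''. split; auto. apply in_or_app; auto.
      * split.
        -- apply in_app_iff in Hk'. destruct Hk' as [Hk'|[<-|[]]]; [right; eauto|left; right; auto].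
        -- intros [k'' [Hk'' Hh]]. apply Hnh. exists k''. split; auto. apply in_or_app; auto.
Qed.
End Fin.


Section Elim.
Variables (Good Fix U : E -> Prop) (w : E).
Hypothesis HF : forall g, Fix g -> exists D, is_circuit M D /\ D g /\ ~ D w /\
   (forall z, D z -> z = g \/ Good z) /\ subset D U.

Lemma elim_gen_n : forall n (l : list E) C, length l <= n -> is_circuit M C -> C w -> subset C U ->
  (forall z, C z -> z = w \/ Good z \/ (Fix z /\ In z l)) ->
  exists C', is_circuit M C' /\ C' w /\ subset C' U /\ forall z, C' z -> z = w \/ Good z.
Proof.
  induction n as [|n IH]; intros l C Hl HC Hw HU Hs.
  - destruct l; [|simpl in Hl; lia]. exists C. split; [auto|split; [auto|split; [auto|]]].
    intros z Hz. destruct (Hs z Hz) as [|[|[_ []]]]; auto.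
  - destruct (classic (exists g, C g /\ g <> w /\ ~ Good g)) as [[g [Hg [Hgw HgG]]]|Hno].
    + destruct (Hs g Hg) as [|[|[HFg Hgl]]]; try contradiction.
      destruct (HF g HFg) as [D [HD [HDg [HDw [HDs HDU]]]]].
      destruct (strong_elim M C D g w HC HD Hg HDg Hw HDw) as [C3 [H3 [Hw3 Hs3]]].
      apply (IH (remove edec g l) C3); auto.
      * pose proof (remove_length_lt edec l g Hgl). lia.
      * intros z Hz. destruct (Hs3 z Hz) as [[|] _]; auto.
      * intros z Hz. destruct (Hs3 z Hz) as [[Hz'|Hz'] Hzg].
        -- destruct (Hs z Hz') as [|[|[]]]; auto. right; right. split; auto. apply in_in_remove; auto.
        -- destruct (HDs z Hz'); [contradiction|auto].
    + exists C. split; [auto|split; [auto|split; [auto|]]].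
      intros z Hz. destruct (classic (z = w)); auto. right. apply NNPP. intro. apply Hno. eauto.
Qed.

Lemma elim_gen : forall C, is_circuit M C -> C w -> subset C U ->
  (forall z, C z -> z = w \/ Good z \/ Fix z) ->
  exists C', is_circuit M C' /\ C' w /\ subset C' U /\ forall z, C' z -> z = w \/ Good z.
Proof.
  intros C HC Hw HU Hs. destruct (circuit_finite M C HC) as [l [_ Hl]].
  apply (elim_gen_n (length l) l C); auto.
  intros z Hz. destruct (Hs z Hz) as [|[|]]; auto. right; right. split; auto. apply Hl; auto.
Qed.
End Elim.
End Mat2.
Arguments base_ext {E}.
Arguments DM_ext {E}.
Arguments fund_exists {E}.
Arguments fund_has {E}.
Arguments exch1 {E}.
Arguments exB {E}.
Arguments Hfin {E}.
Arguments fin_exch {E}.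
Arguments elim_gen_n {E}.
Arguments elim_gen {E}.

Section L.
Variable E : Type.

Fixpoint idx (x : E) (l : list E) : nat :=
  match l with [] => 0 | h :: t => if edec h x then 0 else S (idx x t) end.

Lemma app_cons_len (l1 m1 r1 r2 : list E) x y : l1 ++ x :: r1 = m1 ++ y :: r2 ->
  length l1 = length m1 -> l1 = m1 /\ x = y /\ r1 = r2.
Proof.
  revert m1. induction l1 as [|h t IH]; intros [|h' t'] Heq Hl; simpl in *; try lia.
  - inversion Heq; auto.
  - inversion Heq; subst. destruct (IH t') as [-> [-> ->]]; auto.
Qed.

Lemma idx_app (l1 l2 : list E) x : NoDup (l1 ++ x :: l2) -> idx x (l1 ++ x :: l2) = length l1.
Proof.
  induction l1 as [|h t IH]; simpl; intros Hnd.
  - destruct (edec x x); congruence.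
  - inversion Hnd; subst. destruct (edec h x).
    + subst. exfalso. apply H1. apply in_or_app; simpl; auto.
    + rewrite IH; auto.
Qed.

Lemma idx_tri (p l1 l2 : list E) x y : NoDup p -> p = l1 ++ x :: l2 -> In y p ->
  y = x \/ idx y p < length l1 \/ (length l1 < idx y p /\ later_on p x y).
Proof.
  intros Hnd Hp Hy. rewrite Hp in Hy. apply in_app_or in Hy. destruct Hy as [Hy|[<-|Hy]]; auto.
  - apply in_split in Hy. destruct Hy as [m1 [m2 ->]]. right; left.
    assert (Hp' : p = m1 ++ y :: (m2 ++ x :: l2)) by (rewrite Hp, <- app_assoc; reflexivity).
    rewrite Hp' in Hnd |- *. rewrite idx_app; auto. rewrite length_app. simpl. lia.
  - apply in_split in Hy. destruct Hy as [n1 [n2 ->]]. right; right.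
    assert (Hp' : p = (l1 ++ x :: n1) ++ y :: n2) by (rewrite Hp, <- app_assoc; reflexivity).
    split.
    + rewrite Hp' in Hnd |- *. rewrite idx_app; auto. rewrite length_app. simpl. lia.
    + exists l1, n1, n2. exact Hp.
Qed.

Lemma idx_later (p : list E) x y : NoDup p -> later_on p x y -> idx x p < idx y p.
Proof.
  intros Hnd [l1 [l2 [l3 Hp]]].
  assert (Hp' : p = (l1 ++ x :: l2) ++ y :: l3) by (rewrite Hp, <- app_assoc; reflexivity).
  assert (H1 := Hnd). rewrite Hp in H1. assert (H2 := Hnd). rewrite Hp' in H2.
  rewrite Hp at 1. rewrite Hp'. rewrite idx_app; auto. rewrite idx_app; auto.
  rewrite length_app. simpl. lia.
Qed.

Lemma later_idx (p : list E) x y : NoDup p -> In x p -> In y p -> idx x p < idx y p -> later_on p x y.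
Proof.
  intros Hnd Hx Hy Hlt. apply in_split in Hx. destruct Hx as [l1 [l2 Hp]].
  assert (Hix : idx x p = length l1) by (rewrite Hp in *; apply idx_app; auto).
  destruct (idx_tri p l1 l2 x y Hnd Hp Hy) as [->|[H|[_ H]]]; auto; lia.
Qed.

Lemma idx_inj (p : list E) x y : NoDup p -> In x p -> In y p -> idx x p = idx y p -> x = y.
Proof.
  intros Hnd Hx Hy Heq. apply in_split in Hx. destruct Hx as [l1 [l2 Hp]].
  assert (Hix : idx x p = length l1) by (rewrite Hp in *; apply idx_app; auto).
  destruct (idx_tri p l1 l2 x y Hnd Hp Hy) as [->|[H|[H _]]]; auto; lia.
Qed.

Lemma idx_arc (p : list E) x y : NoDup p -> path_arc p x y -> idx y p = S (idx x p).
Proof.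
  intros Hnd [l1 [l2 Hp]].
  assert (Hp' : p = (l1 ++ [x]) ++ y :: l2) by (rewrite Hp, <- app_assoc; reflexivity).
  assert (H1 := Hnd). rewrite Hp in H1. assert (H2 := Hnd). rewrite Hp' in H2.
  rewrite Hp at 2. rewrite Hp'. rewrite idx_app; auto. rewrite idx_app; auto.
  rewrite length_app. simpl. lia.
Qed.

Lemma arc_in (p : list E) x y : path_arc p x y -> In x p /\ In y p.
Proof. intros [l1 [l2 ->]]. split; apply in_or_app; simpl; auto. Qed.

Lemma succ_unique (p : list E) x y y' : NoDup p -> path_arc p x y -> path_arc p x y' -> y = y'.
Proof.
  intros Hnd H1 H2. apply (idx_inj p); auto. apply arc_in in H1; tauto. apply arc_in in H2; tauto.
  rewrite (idx_arc p x y), (idx_arc p x y'); auto.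
Qed.

Lemma pred_unique (p : list E) x x' y : NoDup p -> path_arc p x y -> path_arc p x' y -> x = x'.
Proof.
  intros Hnd H1 H2. apply (idx_inj p); auto. apply arc_in in H1; tauto. apply arc_in in H2; tauto.
  pose proof (idx_arc p x y Hnd H1). pose proof (idx_arc p x' y Hnd H2). lia.
Qed.
End L.
Arguments idx {E}.
Arguments app_cons_len {E}.
Arguments idx_app {E}.
Arguments idx_tri {E}.
Arguments idx_later {E}.
Arguments later_idx {E}.
Arguments idx_inj {E}.
Arguments idx_arc {E}.
Arguments arc_in {E}.
Arguments succ_unique {E}.
Arguments pred_unique {E}.

Section Core.
Variables (E : Type) (M : finitary_matroid E) (B : E -> Prop) (I : Type) (R0 : I -> I -> Prop)
  (P : I -> list E).
Hypothesis HB : is_base M B.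
Hypothesis Hwo : well_order R0.
Hypothesis Hnd : forall a, NoDup (P a).
Hypothesis Hsc : forall a e f, later_on (P a) e f -> DM M B e f -> path_arc (P a) e f.
Hypothesis Hdis : forall a b, R0 b a -> forall e f C, path_arc (P b) e f -> DM M B e f ->
  fund_circuit M B e C -> forall x, In x (P a) -> ~ C x.

Definition arc a x y := path_arc (P a) x y /\ DM M B x y.
Definition isHead y := exists a x, arc a x y.
Definition isTail x := exists a y, arc a x y.
Definition UM x := exists a e f C, path_arc (P a) e f /\ DM M B e f /\ fund_circuit M B e C /\ C x.
Definition B' := newBM M B P.

Lemma B'_iff z : B' z <-> (B z \/ isTail z) /\ ~ isHead z.
Proof. unfold B', newBM, isTail, isHead, arc. reflexivity. Qed.

Lemma arc_basic a x y : arc a x y -> ~ B x /\ B y /\ y <> x.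
Proof.
  intros [_ [Hx [C [[_ [_ Hs]] [Hy Hyx]]]]]. split; auto. split; auto.
  destruct (Hs y Hy); [auto|contradiction].
Qed.

Lemma arc_circ a x y : arc a x y -> exists C, fund_circuit M B x C /\ C y /\ C x /\ subset C UM.
Proof.
  intros [Hp [Hx [C [HF [Hy Hyx]]]]]. exists C. split; auto. split; auto. split.
  eapply fund_has; eauto. apply HB. intros z Hz. exists a, x, y, C.
  split; [auto|split; [split; [auto|exists C; auto]|split; auto]].
Qed.

Lemma arc_U a x y : arc a x y -> UM x /\ UM y.
Proof. intros H. destruct (arc_circ a x y H) as [C [_ [Hy [Hx HU]]]]. auto. Qed.

Lemma tail_head z : isTail z -> isHead z -> False.
Proof. intros [a [y H1]] [a' [x H2]]. apply arc_basic in H1. apply arc_basic in H2. tauto. Qed.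

Lemma R0_tri a b : R0 a b \/ a = b \/ R0 b a.
Proof. apply Hwo. Qed.
Lemma R0_irr a : ~ R0 a a.
Proof. apply Hwo. Qed.
Lemma R0_trans a b c : R0 a b -> R0 b c -> R0 a c.
Proof. apply Hwo. Qed.

Lemma same_path a x y a' x' y' z : arc a x y -> arc a' x' y' ->
  (forall C, fund_circuit M B x C -> C z) -> (forall C, fund_circuit M B x' C -> C z) ->
  In z (P a) -> In z (P a') -> a = a'.
Proof.
  intros H1 H2 Hc1 Hc2 Hz1 Hz2. destruct (R0_tri a a') as [Hl|[He|Hl]]; auto; exfalso.
  - destruct H1 as [Hp1 Hd1]. destruct (arc_circ a x y (conj Hp1 Hd1)) as [C [HF _]].
    exact (Hdis a' a Hl x y C Hp1 Hd1 HF z Hz2 (Hc1 C HF)).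
  - destruct H2 as [Hp2 Hd2]. destruct (arc_circ a' x' y' (conj Hp2 Hd2)) as [C [HF _]].
    exact (Hdis a a' Hl x' y' C Hp2 Hd2 HF z Hz1 (Hc2 C HF)).
Qed.

Lemma tail_unique a x y a' y' : arc a x y -> arc a' x y' -> a = a' /\ y = y'.
Proof.
  intros H1 H2. assert (a = a').
  { apply (same_path a x y a' x y' x); auto.
    - intros C HF. eapply fund_has; eauto. apply HB.
    - intros C HF. eapply fund_has; eauto. apply HB.
    - apply (arc_in _ _ _ (proj1 H1)).
    - apply (arc_in _ _ _ (proj1 H2)). }
  subst. split; auto. eapply succ_unique; eauto. apply H1. apply H2.
Qed.

Lemma head_unique a x y a' x' : arc a x y -> arc a' x' y -> a = a' /\ x = x'.
Proof.
  intros H1 H2.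
  assert (Hc : forall a0 x0, arc a0 x0 y -> forall C, fund_circuit M B x0 C -> C y).
  { intros a0 x0 [Hp [Hx [C0 [HF0 [Hy0 _]]]]] C HF.
    pose proof HF as [_ [HC Hs]]. pose proof HF0 as [_ [HC0 Hs0]].
    apply (circ_unique M B C0 C x0 (proj1 HB) HC0 HC Hs0 Hs); auto. }
  assert (a = a').
  { apply (same_path a x y a' x' y y); auto.
    - eapply Hc; eauto.
    - eapply Hc; eauto.
    - apply (arc_in _ _ _ (proj1 H1)).
    - apply (arc_in _ _ _ (proj1 H2)). }
  subst. split; auto. eapply pred_unique; eauto. apply H1. apply H2.
Qed.

Definition klt (u v : I * E) : Prop :=
  R0 (fst u) (fst v) \/ (fst u = fst v /\ idx (snd u) (P (fst u)) < idx (snd v) (P (fst u))).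

Lemma klt_wf : well_founded klt.
Proof.
  intros [a x]. revert x. induction a as [a IHa] using (well_founded_ind (proj2 (proj2 (proj2 Hwo)))).
  intros x. remember (idx x (P a)) as n. revert x Heqn.
  induction n as [n IHn] using (well_founded_ind lt_wf). intros x Hn.
  constructor. intros [a' x'] [Hl|[He Hl]]; simpl in *.
  - apply IHa; auto.
  - subst a'. apply (IHn (idx x' (P a))); auto. lia.
Qed.

Lemma klt_irr u : ~ klt u u.
Proof. intros [H|[_ H]]. apply (R0_irr _ H). lia. Qed.

Lemma klt_trans u v w : klt u v -> klt v w -> klt u w.
Proof.
  destruct u as [a x], v as [b y], w as [c z]. unfold klt; simpl.
  intros [H1|[-> H1]] [H2|[-> H2]]; auto.
  - left. eapply R0_trans; eauto.
  - right. split; auto. lia.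
Qed.

Lemma klt_total a x y a' x' y' : arc a x y -> arc a' x' y' ->
  klt (a, x) (a', x') \/ klt (a', x') (a, x) \/ (a = a' /\ x = x' /\ y = y').
Proof.
  intros H1 H2. unfold klt; simpl. destruct (R0_tri a a') as [Hl|[He|Hl]]; auto.
  subst a'. destruct (Nat.lt_trichotomy (idx x (P a)) (idx x' (P a))) as [Hl|[He|Hl]]; auto.
  assert (x = x').
  { apply (idx_inj (P a)); auto. apply (arc_in _ _ _ (proj1 H1)). apply (arc_in _ _ _ (proj1 H2)). }
  subst. right; right. split; auto. split; auto. eapply succ_unique; eauto. apply H1. apply H2.
Qed.

Lemma triang a x y a' x' y' C : arc a x y -> arc a' x' y' -> fund_circuit M B x C -> C y' ->
  (a' = a /\ x' = x) \/ klt (a', x') (a, x).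
Proof.
  intros H1 H2 HF Hy'. unfold klt; simpl.
  destruct (R0_tri a a') as [Hl|[He|Hl]]; auto.
  - exfalso. destruct H1 as [Hp1 Hd1]. apply (Hdis a' a Hl x y C Hp1 Hd1 HF y'); auto.
    apply (arc_in _ _ _ (proj1 H2)).
  - subst a'. destruct (classic (x' = x)) as [->|Hxx]; auto. right. right. split; auto.
    assert (Hyy : y' <> y) by (intro; subst; apply Hxx; symmetry; eapply head_unique; eauto).
    pose proof (arc_basic a x y H1) as [HxB _]. pose proof (arc_basic a x' y' H2) as [_ [Hy'B _]].
    assert (Hy'x : y' <> x) by (intro; subst; contradiction).
    assert (Hin1 : In x (P a)) by apply (arc_in _ _ _ (proj1 H1)).
    assert (Hin2 : In y' (P a)) by apply (arc_in _ _ _ (proj1 H2)).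
    pose proof (idx_arc (P a) x' y' (Hnd a) (proj1 H2)) as Hia.
    destruct (Nat.lt_trichotomy (idx x (P a)) (idx y' (P a))) as [Hl|[He|Hl]].
    + exfalso. apply Hyy. apply (succ_unique (P a) x); auto.
      * apply Hsc. apply later_idx; auto. split; auto. exists C. auto.
      * apply H1.
    + exfalso. apply Hy'x. symmetry. apply (idx_inj (P a)); auto.
    + lia.
Qed.

Lemma heads_span : forall u y, arc (fst u) (snd u) y ->
  exists D, is_circuit M D /\ D y /\ (forall z, D z -> z = y \/ B' z) /\ subset D UM.
Proof.
  intros u. induction u as [[a x] IH] using (well_founded_ind klt_wf). simpl. intros y Harc.
  destruct (arc_circ a x y Harc) as [C [HF [HCy [HCx HCU]]]].
  pose proof HF as [HxB [HC HCs]].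
  destruct (elim_gen M B' (fun g => exists a' x', arc a' x' g /\ klt (a', x') (a, x)) UM y)
    with (C := C) as [C' [H1 [H2 [H3 H4]]]]; auto.
  - intros g [a' [x' [Harc' Hk]]]. destruct (IH (a', x') Hk g Harc') as [D [HD [HDg [HDs HDU]]]].
    exists D. split; auto. split; auto. split; auto. intro HDy.
    destruct (HDs y HDy) as [Hyg|HyB'].
    + subst g. destruct (head_unique a x y a' x' Harc Harc'). subst. apply (klt_irr _ Hk).
    + apply B'_iff in HyB'. apply (proj2 HyB'). exists a, x. auto.
  - intros z Hz. destruct (classic (z = y)) as [|Hzy]; auto. right.
    destruct (HCs z Hz) as [HzB| ->].
    + destruct (classic (isHead z)) as [[a' [x' Harc']]|Hnh].
      * right. exists a', x'. split; auto.
        destruct (triang a x y a' x' z C Harc Harc' HF Hz) as [[-> ->]|Hk]; auto.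
        exfalso. apply Hzy. eapply succ_unique; eauto. apply Harc'. apply Harc.
      * left. apply B'_iff. auto.
    + left. apply B'_iff. split. right. exists a, y; auto.
      intro Hh. apply (tail_head x); auto. exists a, y; auto.
  - exists C'. auto.
Qed.

Definition arcT (t : (I * E) * E) := arc (fst (fst t)) (snd (fst t)) (snd t).
Definition Rt (t t' : (I * E) * E) := klt (fst t) (fst t').

Ltac solve_in := let s := fresh in intros s; simpl; split; intros;
  repeat match goal with H: _ \/ _ |- _ => destruct H end; subst; auto; tauto.

Lemma insert_sorted : forall L, StronglySorted Rt L -> (forall t, In t L -> arcT t) ->
  forall t, arcT t -> exists L', StronglySorted Rt L' /\ forall s, In s L' <-> s = t \/ In s L.
Proof.
  induction L as [|h L IH]; intros HS HA t Ht.
  - exists [t]. split. constructor; auto. solve_in.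
  - apply StronglySorted_inv in HS. destruct HS as [HS HF]. rewrite Forall_forall in HF.
    destruct t as [[a x] y], h as [[a' x'] y'].
    destruct (klt_total a x y a' x' y' Ht (HA _ (or_introl eq_refl))) as [Hk|[Hk|[-> [-> ->]]]].
    + exists (((a,x),y) :: ((a',x'),y') :: L). split.
      * constructor. constructor; auto. rewrite Forall_forall; auto.
        rewrite Forall_forall. intros s [<-|Hs]; auto. eapply klt_trans; eauto. apply (HF s Hs).
      * solve_in.
    + destruct (IH HS (fun s Hs => HA s (or_intror Hs)) ((a,x),y) Ht) as [L' [HS' HL']].
      exists (((a',x'),y') :: L'). split.
      * constructor; auto. rewrite Forall_forall. intros s Hs. apply HL' in Hs.
        destruct Hs as [->|Hs]; auto.
      * intros s. simpl. rewrite HL'. tauto.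
    + exists (((a',x'),y') :: L). split. constructor; auto. rewrite Forall_forall; auto.
      solve_in.
Qed.

Lemma sort_arcs : forall L0, (forall t, In t L0 -> arcT t) ->
  exists L, StronglySorted Rt L /\ forall s, In s L <-> In s L0.
Proof.
  induction L0 as [|t L0 IH]; intros HA.
  - exists []. split. constructor. tauto.
  - destruct IH as [L [HS HL]]. intros s Hs; apply HA; simpl; auto.
    destruct (insert_sorted L HS (fun s Hs => HA s (or_intror (proj1 (HL s) Hs))) t (HA t (or_introl eq_refl)))
      as [L' [HS' HL']].
    exists L'. split; auto. intros s. rewrite HL', HL. simpl. split; intros [H|H]; auto.
Qed.

Lemma SS_split (L l1 l2 : list ((I*E)*E)) t : StronglySorted Rt L -> L = l1 ++ t :: l2 ->
  forall t', In t' l2 -> Rt t t'.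
Proof.
  revert L. induction l1 as [|h l1 IH]; intros L HS HL t' Ht'; subst L; simpl in HS;
    apply StronglySorted_inv in HS; destruct HS as [HS HF].
  - rewrite Forall_forall in HF. auto.
  - eapply IH; eauto.
Qed.

Lemma collect : forall l : list E, exists L0, (forall t, In t L0 -> arcT t) /\
  forall z, In z l -> isTail z -> exists t, In t L0 /\ snd (fst t) = z.
Proof.
  induction l as [|h l IH].
  - exists []. split; intros; simpl in *; tauto.
  - destruct IH as [L0 [HA HT]]. destruct (classic (isTail h)) as [[a [y Harc]]|Hnt].
    + exists (((a,h),y) :: L0). split.
      * intros t [<-|Ht]; auto.
      * intros z [Hz|Hz] Hzt. subst z. exists ((a,h),y); simpl; auto.
        destruct (HT z Hz Hzt) as [t [Ht Hte]]. exists t; simpl; auto.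
    + exists L0. split; auto. intros z [Hz|Hz] Hzt; [subst; contradiction|auto].
Qed.

Lemma newB_indep : indep M B'.
Proof.
  apply NNPP. intro Hd. destruct (dep_finite M B' Hd) as [l [Hl Hdl]].
  destruct (collect l) as [L0 [HA HT]]. destruct (sort_arcs L0 HA) as [L [HS HL]].
  set (tl := fun t : (I*E)*E => snd (fst t)). set (hd := fun t : (I*E)*E => snd t).
  assert (HLa : forall t, In t L -> arcT t) by (intros t Ht; apply HA, HL; auto).
  assert (Hf : Hfin M _ tl hd B L).
  { intros l1 t l2 Heq. destruct t as [[a x] y].
    destruct (arc_circ a x y (HLa _ (ltac:(rewrite Heq; apply in_or_app; simpl; auto))))
      as [C [HF [HCy _]]].
    pose proof (arc_basic a x y (HLa _ (ltac:(rewrite Heq; apply in_or_app; simpl; auto)))) as [_ [_ Hyx]].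
    exists C. unfold tl, hd. simpl. split; auto. split; auto. split; auto.
    intros [[a' x'] y'] Ht' HCy'. simpl in HCy'.
    pose proof (SS_split L l1 l2 _ HS Heq _ Ht') as Hr. unfold Rt in Hr; simpl in Hr.
    assert (Harc' : arc a' x' y') by (apply (HLa ((a',x'),y')); rewrite Heq; apply in_or_app; simpl; auto).
    destruct (triang a x y a' x' y' C (HLa _ (ltac:(rewrite Heq; apply in_or_app; simpl; auto))) Harc' HF HCy')
      as [[-> ->]|Hk].
    - apply (klt_irr _ Hr).
    - apply (klt_irr (a, x)). eapply klt_trans; eauto. }
  pose proof (fin_exch M _ tl hd L B HB Hf) as [Hi _].
  apply Hdl. apply indep_ext with (A := exB _ tl hd B L); auto.
  intros z Hz. pose proof (Hl z Hz) as Hz'. apply B'_iff in Hz'. destruct Hz' as [Hz1 Hz2].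
  split.
  - destruct Hz1 as [|Ht]; auto. right. destruct (HT z Hz Ht) as [t [Ht0 Hte]].
    exists t. split; auto. apply HL; auto.
  - intros [t [Ht Hh]]. apply Hz2. exists (fst (fst t)), (snd (fst t)). rewrite <- Hh. apply HLa; auto.
Qed.

Lemma newB_base : is_base M B'.
Proof.
  split. apply newB_indep.
  intros J HJ Hsub z Hz. apply NNPP. intro Hn.
  assert (HD : exists D, is_circuit M D /\ forall w, D w -> w = z \/ B' w).
  { destruct (classic (isHead z)) as [[a [x Harc]]|Hnh].
    - destruct (heads_span (a, x) z Harc) as [D [HD [_ [HDs _]]]]. eauto.
    - assert (HzB : ~ B z) by (intro; apply Hn; apply B'_iff; auto).
      assert (Hzt : ~ isTail z) by (intro; apply Hn; apply B'_iff; split; auto).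
      destruct (fund_exists M B z HB HzB) as [C HF]. pose proof HF as [_ [HC HCs]].
      destruct (elim_gen M B' isHead (fun _ => True) z) with (C := C) as [C' [H1 [_ [_ H4]]]].
      + intros g [a [x Harc]]. destruct (heads_span (a, x) g Harc) as [D [HD [HDg [HDs _]]]].
        exists D. split; auto. split; auto. split.
        * intro HDz. destruct (HDs z HDz) as [->|]; [apply Hnh; exists a, x; auto|contradiction].
        * split; auto. intros w _; exact Logic.I.
      + auto.
      + exact (fund_has M B C z (proj1 HB) HF).
      + intros w _; exact Logic.I.
      + intros w Hw. destruct (HCs w Hw) as [HwB| ->]; auto. right.
        destruct (classic (isHead w)); auto. left. apply B'_iff. auto.
      + exists C'. auto. }
  destruct HD as [D [[HDd _] HDs]]. apply HDd. apply indep_ext with (A := J); auto.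
  intros w Hw. destruct (HDs w Hw) as [->|]; auto.
Qed.

Lemma B'_out z : ~ UM z -> (B' z <-> B z).
Proof.
  intros Hz. rewrite B'_iff. split.
  - intros [[|[a [y Harc]]] _]; auto. exfalso. apply Hz. apply (arc_U _ _ _ Harc).
  - intros HzB. split; auto. intros [a [x Harc]]. apply Hz. apply (arc_U _ _ _ Harc).
Qed.

Lemma DM_new x y : ~ UM x -> ~ UM y -> (DM M B' x y <-> DM M B x y).
Proof.
  intros Hx Hy. split.
  - intros [Hx' [C [HF [HCy Hyx]]]]. pose proof HF as [_ [HC HCs]].
    assert (HxB : ~ B x) by (rewrite <- (B'_out x Hx); auto).
    destruct (elim_gen M (fun z => B z \/ z = x) isTail (fun _ => True) y) with (C := C)
      as [C' [H1 [H2 [_ H4]]]]; auto.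
    + intros g [a [y0 Harc]]. destruct (arc_circ a g y0 Harc) as [D [HFD [_ [HDg HDU]]]].
      pose proof HFD as [_ [HD HDs]]. exists D. split; auto. split; auto. split.
      * intro HDy. apply Hy. apply HDU; auto.
      * split; [|intros w _; exact Logic.I]. intros z Hz. destruct (HDs z Hz); auto.
    + intros w _; exact Logic.I.
    + intros z Hz. destruct (HCs z Hz) as [HzB| ->]; auto.
      apply B'_iff in HzB. destruct HzB as [[|] _]; auto.
    + split; auto. exists C'. split; [split; [auto|split; auto]|split; auto].
      intros z Hz. destruct (H4 z Hz) as [->|]; auto.
      destruct (HCs y HCy) as [HyB| ->]; [left; apply (B'_out y Hy); auto|contradiction].
  - intros [HxB [C [HF [HCy Hyx]]]]. pose proof HF as [_ [HC HCs]].
    assert (Hx' : ~ B' x) by (rewrite (B'_out x Hx); auto).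
    destruct (elim_gen M (fun z => B' z \/ z = x) isHead (fun _ => True) y) with (C := C)
      as [C' [H1 [H2 [_ H4]]]]; auto.
    + intros g [a [x0 Harc]]. destruct (heads_span (a, x0) g Harc) as [D [HD [HDg [HDs HDU]]]].
      exists D. split; auto. split; auto. split.
      * intro HDy. apply Hy. apply HDU; auto.
      * split; [|intros w _; exact Logic.I]. intros z Hz. destruct (HDs z Hz); auto.
    + intros w _; exact Logic.I.
    + intros z Hz. right. destruct (HCs z Hz) as [HzB| ->]; [|left; right; auto].
      destruct (classic (isHead z)) as [|Hnh]; [right; auto| left; left; apply B'_iff; auto].
    + split; auto. exists C'. split; [split; [auto|split; auto]|split; auto].
      intros z Hz. destruct (H4 z Hz) as [->|]; auto.
      destruct (HCs y HCy) as [HyB| ->]; [left; apply (B'_out y Hy); auto|contradiction].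
Qed.

End Core.

Lemma arc_rev {E} (p : list E) x y : path_arc p x y -> path_arc (rev p) y x.
Proof.
  intros [l1 [l2 ->]]. exists (rev l2), (rev l1). rewrite rev_app_distr. simpl.
  rewrite <- !app_assoc. reflexivity.
Qed.

Lemma arc_rev_iff {E} (p : list E) x y : path_arc (rev p) x y <-> path_arc p y x.
Proof.
  split; intros H. apply arc_rev in H. rewrite rev_involutive in H. exact H. apply arc_rev; auto.
Qed.

Lemma later_rev {E} (p : list E) x y : later_on (rev p) x y -> later_on p y x.
Proof.
  intros [l1 [l2 [l3 H]]]. exists (rev l3), (rev l2), (rev l1).
  rewrite <- (rev_involutive p), H. rewrite !rev_app_distr. simpl.
  repeat (rewrite !rev_app_distr; simpl). repeat (rewrite <- !app_assoc; simpl). reflexivity.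
Qed.

Theorem lemma3p7 (E : Type) (M N : finitary_matroid E) (BM BN : E -> Prop)
  (I : Type) (lt : I -> I -> Prop) (P : I -> list E) :
  is_base M BM -> is_base N BN -> well_order lt ->
  (forall a, is_path (Db M N BM BN) (P a)) ->
  (forall a, no_shortcut (Db M N BM BN) (P a)) ->
  (forall a b, lt b a -> forall e f C, path_arc (P b) e f ->
     escort M N BM BN e f C -> forall x, In x (P a) -> ~ C x) ->
  is_base M (newBM M BM P) /\ is_base N (newBN N BN P) /\
  (forall x y, ~ Uxi M N BM BN P x -> ~ Uxi M N BM BN P y ->
     (DM M (newBM M BM P) x y <-> DM M BM x y)) /\
  (forall x y, ~ Uxi M N BM BN P x -> ~ Uxi M N BM BN P y ->
     (DM N (newBN N BN P) x y <-> DM N BN x y)).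
Proof.
  intros HBM HBN Hwo Hpath Hns Hdis.
  assert (Hnd : forall a, NoDup (P a)) by (intros a; apply Hpath).
  assert (HscM : forall a e f, later_on (P a) e f -> DM M BM e f -> path_arc (P a) e f).
  { intros a e f Hl Hd. apply NNPP. intro Hn. apply (Hns a). exists e, f. split; [left; auto|auto]. }
  assert (HdisM : forall a b, lt b a -> forall e f C, path_arc (P b) e f -> DM M BM e f ->
    fund_circuit M BM e C -> forall x, In x (P a) -> ~ C x).
  { intros a b Hl e f C Hp Hd HF. apply (Hdis a b Hl e f C Hp). left; auto. }
  set (P' := fun a => rev (P a)).
  assert (Hnd' : forall a, NoDup (P' a)) by (intros a; apply NoDup_rev; auto).
  assert (HscN : forall a e f, later_on (P' a) e f -> DM N BN e f -> path_arc (P' a) e f).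
  { intros a e f Hl Hd. apply (arc_rev_iff (P a)). apply NNPP. intro Hn. apply (Hns a). exists f, e.
    split; [right; auto|split; auto]. apply later_rev; auto. }
  assert (HdisN : forall a b, lt b a -> forall e f C, path_arc (P' b) e f -> DM N BN e f ->
    fund_circuit N BN e C -> forall x, In x (P' a) -> ~ C x).
  { intros a b Hl e f C Hp0 Hd HF x Hx.
    assert (Hp : path_arc (P b) f e) by (apply (arc_rev_iff (P b)); exact Hp0).
    apply (Hdis a b Hl f e C Hp). right; auto. apply in_rev; auto. }
  assert (HeqN : forall z, newBM N BN P' z <-> newBN N BN P z).
  { intros z. unfold newBM, newBN, P'. split; intros [[H1|[a [y [Hp Hd]]]] H2].
    - split. left; auto. intros [a [y [Hp Hd]]]. apply H2. exists a, y. split; auto. apply arc_rev_iff; auto.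
    - split. right. exists a, y. split; auto. apply arc_rev_iff; auto.
      intros [a' [y' [Hp' Hd']]]. apply H2. exists a', y'. split; auto. apply arc_rev_iff; auto.
    - split. left; auto. intros [a' [y' [Hp' Hd']]]. apply H2. exists a', y'. split; auto. apply arc_rev_iff; auto.
    - split. right. exists a, y. split; auto. apply arc_rev_iff; auto.
      intros [a' [y' [Hp' Hd']]]. apply H2. exists a', y'. split; auto. apply arc_rev_iff; auto. }
  assert (HUM : forall x, ~ Uxi M N BM BN P x -> ~ UM E M BM I P x).
  { intros x Hx [a [e [f [C [Hp [Hd [HF HC]]]]]]]. apply Hx. exists a, e, f, C. split; auto. split; auto. left; auto. }
  assert (HUN : forall x, ~ Uxi M N BM BN P x -> ~ UM E N BN I P' x).
  { intros x Hx [a [e [f [C [Hp [Hd [HF HC]]]]]]]. apply Hx. exists a, f, e, C.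
    split. apply (arc_rev_iff (P a)); exact Hp. split; auto. right; auto. }
  split; [|split; [|split]].
  - exact (newB_base E M BM I lt P HBM Hwo Hnd HscM HdisM).
  - apply base_ext with (A := newBM N BN P'); auto.
    exact (newB_base E N BN I lt P' HBN Hwo Hnd' HscN HdisN).
  - intros x y Hx Hy. exact (DM_new E M BM I lt P HBM Hwo Hnd HscM HdisM x y (HUM x Hx) (HUM y Hy)).
  - intros x y Hx Hy. pose proof (DM_new E N BN I lt P' HBN Hwo Hnd' HscN HdisN x y (HUN x Hx) (HUN y Hy)) as H.
    split; intros Hd.
    + apply H. apply DM_ext with (A := newBN N BN P); auto. intros z; split; intros Hz; apply (HeqN z); exact Hz.
    + apply DM_ext with (A := newBM N BN P'); [apply H; auto|exact HeqN].
Qed.
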